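(* Let $A$ be a binary $n\times m$ matrix that has no two identical rows, and suppose $A$ has a binary base $\{u_1,\dots,u_d\}$ that is disjoint in rows. Then $\{u_1,\dots,u_d\}$ spans (in the binary sense) every other binary base of $A$.
   Context: A set $X$ of $\{0,1\}$-vectors spans a vector $y$ (binary sense) if $y=\sum_{x\in X}c_xx$ with $c_x\in\{0,1\}$ and ordinary addition; it spans a set $Y$ if it spans each vector of $Y$. A binary base of $A$ is a set of $\{0,1\}$ column vectors of length $n$ spanning every column of $A$, of minimum cardinality among such spanning sets. A base is disjoint in rows if no two distinct vectors of it have a $1$ in the same coordinate. *)

(* Defs.v *)
(* Binary vectors of length n are column vectors 'cV[bool]_n;
   a bit b is read as the natural number (nat_of_bool b) in {0,1}. *)
From mathcomp Require Import all_boot all_order all_algebra.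
Set Implicit Arguments. Unset Strict Implicit. Unset Printing Implicit Defensive.

Section Binary.
Variable n : nat.
Local Notation bvec := 'cV[bool]_n.

(* X spans y in the binary sense: y = sum_{x in X} c_x x with c_x in {0,1},
   ordinary (nat) addition; choosing c is choosing the subset S of X with c_x=1. *)
Definition bspans_vec (X : {set bvec}) (y : bvec) : Prop :=
  exists S : {set bvec}, S \subset X /\
    forall i : 'I_n, (y i ord0 : nat) = (\sum_(x in S) (x i ord0 : nat))%N.

Definition bspans (X Y : {set bvec}) : Prop :=
  forall y, y \in Y -> bspans_vec X y.

Definition spans_columns (m : nat) (A : 'M[bool]_(n, m)) (X : {set bvec}) : Prop :=
  forall j : 'I_m, bspans_vec X (col j A).

Definition binary_base (m : nat) (A : 'M[bool]_(n, m)) (B : {set bvec}) : Prop :=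
  spans_columns A B /\ forall X : {set bvec}, spans_columns A X -> #|B| <= #|X|.

Definition disjoint_in_rows (B : {set bvec}) : Prop :=
  forall u v, u \in B -> v \in B -> u != v -> forall i : 'I_n, ~~ (u i ord0 && v i ord0).

Definition no_identical_rows (m : nat) (A : 'M[bool]_(n, m)) : Prop :=
  forall i i' : 'I_n, row i A = row i' A -> i = i'.
End Binary.

(* Main.v *)
Require Import Defs.
From mathcomp Require Import all_boot all_order all_algebra.

Lemma sum0 n (S : {set 'cV[bool]_n}) i :
  (forall x, x \in S -> x i ord0 = false) ->
  (\sum_(x in S) (x i ord0 : nat))%N = 0%N.
Proof. by move=> H; rewrite big1 // => x /H ->. Qed.

Lemma sum1 n (U S : {set 'cV[bool]_n}) u i :
  disjoint_in_rows U -> S \subset U -> u \in U -> u i ord0 ->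
  (\sum_(x in S) (x i ord0 : nat))%N = (u \in S).
Proof.
move=> dU sSU uU ui.
case uS: (u \in S).
- rewrite (bigD1 u) //= ui big1 // => x /andP [xS xu].
  have := dU _ _ (subsetP sSU _ xS) uU xu i.
  by rewrite ui andbT => /negbTE ->.
- rewrite big1 // => x xS.
  have xu : x != u by apply/eqP => exu; rewrite -exu xS in uS.
  have := dU _ _ (subsetP sSU _ xS) uU xu i.
  by rewrite ui andbT => /negbTE ->.
Qed.

Arguments sum0 {n S i}.
Arguments sum1 {n U S u i}.

Theorem mainTheorem12 (n m : nat) (A : 'M[bool]_(n, m)) (U : {set 'cV[bool]_n}) :
  no_identical_rows A -> binary_base A U -> disjoint_in_rows U ->
  forall B : {set 'cV[bool]_n}, binary_base A B -> bspans U B.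
Proof.
move=> nid [spU minU] dU B [spB minB] b bB.
have [j dom] : exists j, forall i, b i ord0 -> A i j.
  case: (boolP [exists j, [forall i, b i ord0 ==> A i j]]) =>
    [/existsP [j /forallP H]|Hn].
    by exists j => i bi; exact: (implyP (H i) bi).
  exfalso.
  have: spans_columns A (B :\ b).
    move=> j; have [S [sSB HS]] := spB j.
    exists S; split=> //.
    apply/subsetP => x xS; rewrite in_setD1 (subsetP sSB _ xS) andbT.
    apply/eqP => xb; subst x.
    move/negP: Hn; apply; apply/existsP; exists j; apply/forallP => i.
    apply/implyP => bi.
    by move: (HS i); rewrite (bigD1 b) //= bi !mxE; case: (A i j).
  move=> /minB. by rewrite (cardsD1 b B) bB add1n ltnn.
set S := [set u in U | [exists i, u i ord0 && b i ord0]].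
have sSU : S \subset U by apply/subsetP => x; rewrite inE => /andP [].
exists S; split=> // i.
case: (pickP [pred u in U | u i ord0]) => [u /andP [uU ui] | none].
  rewrite (sum1 dU sSU uU ui) inE uU /=.
  case bi: (b i ord0).
    have -> : [exists i0, u i0 ord0 && b i0 ord0] by apply/existsP; exists i; rewrite ui bi.
    by [].
  case: existsP => [[i' /andP [ui' bi']]|] //.
  exfalso.
  have ii' : i = i'.
    apply: nid; apply/rowP => k; rewrite !mxE.
    have [Sk [sSk HSk]] := spU k.
    move: (HSk i) (HSk i'); rewrite !mxE (sum1 dU sSk uU ui) (sum1 dU sSk uU ui').
    by case: (A i k); case: (A i' k); case: (u \in Sk).
  by subst i'; rewrite bi' in bi.
rewrite sum0; last first.
  move=> x xS; have := none x; by rewrite /= (subsetP sSU _ xS).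
case bi: (b i ord0) => //.
have := dom i bi.
have [Sj [sSj HSj]] := spU j.
move: (HSj i); rewrite mxE sum0; first by case: (A i j).
move=> x xS; have := none x; by rewrite /= (subsetP sSj _ xS).
Qed.
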